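(* Let $\theta\in\mathbb{R}^q$ be constant and let $y=\phi^\top\theta$, with $y$ scalar and $\phi$ an $\mathbb{R}^q$-valued signal, either in continuous time (CT) or in discrete time (DT). Fix $\gamma>0$, a positive gain function $\gamma_g(\cdot)>0$, and initial values $\theta_{g0}\in\mathbb{R}^q$, $\theta_0\in\mathbb{R}^q$. In CT (with $\phi$ bounded and continuous and $\gamma_g$ continuous) define $\dot{\hat\theta}_g=-\gamma_g(t)\phi\phi^\top\hat\theta_g+\gamma_g(t)\phi y$, $\hat\theta_g(0)=\theta_{g0}$; $\dot\Phi=-\gamma_g(t)\phi\phi^\top\Phi$, $\Phi(0)=I_q$; $\dot{\hat\theta}=\gamma\Delta(Y-\Delta\hat\theta)$, $\hat\theta(0)=\theta_0$. In DT (with $\phi$ bounded) define, with $g(k):=1/(\gamma_g(k)+|\phi(k)|^2)$, $\hat\theta_g(k+1)=(I_q-g(k)\phi(k)\phi^\top(k))\hat\theta_g(k)+g(k)\phi(k)y(k)$, $\hat\theta_g(0)=\theta_{g0}$; $\Phi(k+1)=(I_q-g(k)\phi(k)\phi^\top(k))\Phi(k)$, $\Phi(0)=I_q$; $\hat\theta(k+1)=\hat\theta(k)+\frac{\Delta(k)}{\gamma+\Delta^2(k)}(Y(k)-\Delta(k)\hat\theta(k))$, $\hat\theta(0)=\theta_0$. In both cases $\mathcal D:=I_q-\Phi$, $\Delta:=\det\{\mathcal D\}$, $Y:=\mathrm{adj}\{\mathcal D\}(\hat\theta_g-\Phi\theta_{g0})$ (adj denotes the adjugate matrix). If the regression equation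 is identifiable, then $\tilde\theta:=\hat\theta-\theta$ converges to zero exponentially.
   Context: Identifiability: there exist $q$ time instants (positive reals in CT, nonnegative integers in DT) $\tau_1,\dots,\tau_q$ such that $[\phi(\tau_1)|\cdots|\phi(\tau_q)]$ has rank $q$. *)

(* Defs.v *)
From HB Require Import structures.
From mathcomp Require Import all_boot all_order all_algebra.
From mathcomp Require Import all_classical all_reals all_analysis.
Set Implicit Arguments. Unset Strict Implicit. Unset Printing Implicit Defensive.
Import Order.TTheory GRing.Theory Num.Theory.
Local Open Scope ring_scope.

Definition yout (R : ringType) (T : Type) (q : nat)
  (phi : T -> 'cV[R]_q) (theta : 'cV[R]_q) (t : T) : R :=
  ((phi t)^T *m theta) ord0 ord0.

Definition DDmx (R : comRingType) (q : nat) (Phi : 'M[R]_q) : 'M[R]_q :=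
  1%:M - Phi.
Definition Delta (R : comRingType) (q : nat) (Phi : 'M[R]_q) : R :=
  \det (DDmx Phi).
Definition Yreg (R : comRingType) (q : nat) (Phi : 'M[R]_q)
  (thg thg0 : 'cV[R]_q) : 'cV[R]_q :=
  \adj (DDmx Phi) *m (thg - Phi *m thg0).

Definition identifiable (R : fieldType) (T : Type) (q : nat)
  (admissible : T -> Prop) (phi : T -> 'cV[R]_q) : Prop :=
  exists tau : 'I_q -> T, (forall j, admissible (tau j)) /\
    \rank (\matrix_(i < q, j < q) phi (tau j) i ord0) = q.

Definition dt_gain (R : fieldType) (q : nat) (gg : nat -> R)
  (phi : nat -> 'cV[R]_q) (k : nat) : R :=
  (gg k + \sum_(i < q) (phi k i ord0) ^+ 2)^-1.

Definition dt_step (R : fieldType) (q : nat) (gg : nat -> R)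
  (phi : nat -> 'cV[R]_q) (k : nat) : 'M[R]_q :=
  1%:M - dt_gain gg phi k *: (phi k *m (phi k)^T).

Fixpoint dt_thg (R : fieldType) (q : nat) (gg : nat -> R)
  (phi : nat -> 'cV[R]_q) (theta thg0 : 'cV[R]_q) (k : nat) : 'cV[R]_q :=
  match k with
  | 0 => thg0
  | k'.+1 => dt_step gg phi k' *m dt_thg gg phi theta thg0 k'
             + (dt_gain gg phi k' * yout phi theta k') *: phi k'
  end.

Fixpoint dt_Phi (R : fieldType) (q : nat) (gg : nat -> R)
  (phi : nat -> 'cV[R]_q) (k : nat) : 'M[R]_q :=
  match k with
  | 0 => 1%:M
  | k'.+1 => dt_step gg phi k' *m dt_Phi gg phi k'
  end.

Fixpoint dt_th (R : fieldType) (q : nat) (gamma : R) (gg : nat -> R)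
  (phi : nat -> 'cV[R]_q) (theta thg0 th0 : 'cV[R]_q) (k : nat) : 'cV[R]_q :=
  match k with
  | 0 => th0
  | k'.+1 =>
      let De := Delta (dt_Phi gg phi k') in
      dt_th gamma gg phi theta thg0 th0 k'
      + (De / (gamma + De ^+ 2)) *:
          (Yreg (dt_Phi gg phi k') (dt_thg gg phi theta thg0 k') thg0
           - De *: dt_th gamma gg phi theta thg0 th0 k')
  end.

(* Main.v *)
Require Import Defs.
From HB Require Import structures.
From mathcomp Require Import all_boot all_order all_algebra.
From mathcomp Require Import ring lra perm fingroup.
From mathcomp Require Import all_classical all_reals all_analysis.
Set Implicit Arguments. Unset Strict Implicit. Unset Printing Implicit Defensive.
Import Order.TTheory GRing.Theory Num.Theory.
Import numFieldNormedType.Exports.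
Local Open Scope ring_scope.
Local Open Scope classical_set_scope.

Definition ip (R : realFieldType) (q : nat) (u v : 'cV[R]_q) : R := (u^T *m v) 0 0.
Definition nrm (R : realFieldType) (q : nat) (v : 'cV[R]_q) : R := ip v v.

Lemma ipE (R : realFieldType) q (u v : 'cV[R]_q) : ip u v = \sum_i u i 0 * v i 0.
Proof. by rewrite /ip mxE; apply: eq_bigr => i _; rewrite mxE. Qed.

Lemma ipC (R : realFieldType) q (u v : 'cV[R]_q) : ip u v = ip v u.
Proof. by rewrite !ipE; apply: eq_bigr => i _; rewrite mulrC. Qed.

Lemma ipDl (R : realFieldType) q (u w v : 'cV[R]_q) : ip (u + w) v = ip u v + ip w v.
Proof. by rewrite !ipE -big_split; apply: eq_bigr => i _; rewrite mxE mulrDl. Qed.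
Lemma ipDr (R : realFieldType) q (u w v : 'cV[R]_q) : ip v (u + w) = ip v u + ip v w.
Proof. by rewrite !ipE -big_split; apply: eq_bigr => i _; rewrite mxE mulrDr. Qed.
Lemma ipNl (R : realFieldType) q (u v : 'cV[R]_q) : ip (- u) v = - ip u v.
Proof. by rewrite !ipE -sumrN; apply: eq_bigr => i _; rewrite mxE mulNr. Qed.
Lemma ipNr (R : realFieldType) q (u v : 'cV[R]_q) : ip v (- u) = - ip v u.
Proof. by rewrite !ipE -sumrN; apply: eq_bigr => i _; rewrite mxE mulrN. Qed.
Lemma ipZl (R : realFieldType) q a (u v : 'cV[R]_q) : ip (a *: u) v = a * ip u v.
Proof. by rewrite !ipE mulr_sumr; apply: eq_bigr => i _; rewrite mxE mulrA. Qed.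
Lemma ipZr (R : realFieldType) q a (u v : 'cV[R]_q) : ip v (a *: u) = a * ip v u.
Proof. by rewrite !ipE mulr_sumr; apply: eq_bigr => i _; rewrite mxE mulrCA. Qed.
Lemma ipMr (R : realFieldType) q (M : 'M[R]_q) (u v : 'cV[R]_q) :
  ip u (M *m v) = ip (M^T *m u) v.
Proof. by rewrite /ip trmx_mul trmxK mulmxA. Qed.
Lemma ip0r (R : realFieldType) q (u : 'cV[R]_q) : ip u 0 = 0.
Proof. by rewrite ipE big1 // => i _; rewrite mxE mulr0. Qed.

Lemma nrm_ge0 (R : realFieldType) q (v : 'cV[R]_q) : 0 <= nrm v.
Proof. by rewrite /nrm ipE sumr_ge0 // => i _; rewrite -expr2 sqr_ge0. Qed.

Lemma nrm_coord (R : realFieldType) q (v : 'cV[R]_q) i : v i 0 ^+ 2 <= nrm v.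
Proof.
rewrite /nrm ipE (bigD1 i) //= expr2 lerDl sumr_ge0 // => j _.
by rewrite -expr2 sqr_ge0.
Qed.

Lemma nrm_eq0 (R : realFieldType) q (v : 'cV[R]_q) : nrm v = 0 -> v = 0.
Proof.
move=> h; apply/matrixP => i j; rewrite (ord1 j) mxE.
have := nrm_coord v i; rewrite h => h2.
by apply/eqP; rewrite -sqrf_eq0 eq_le h2 sqr_ge0.
Qed.

Lemma nrm_lt (R : realFieldType) q (v : 'cV[R]_q) : v != 0 -> 0 < nrm v.
Proof.
move=> nz; rewrite lt_def nrm_ge0 andbT; apply/eqP => /nrm_eq0 h.
by rewrite h eqxx in nz.
Qed.

Lemma quad_bound (R : realFieldType) q (B : 'M[R]_q) :
  exists K, 0 <= K /\ forall v : 'cV[R]_q, ip v (B *m v) <= K * nrm v.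
Proof.
exists (\sum_i \sum_j `|B i j|); split.
  by apply: sumr_ge0 => i _; apply: sumr_ge0.
move=> v; rewrite ipE mulr_suml; apply: ler_sum => i _.
rewrite mxE mulr_sumr mulr_suml; apply: ler_sum => j _.
rewrite mulrCA (le_trans (real_ler_norm _)) ?num_real //. rewrite !normrM. idtac.
idtac.
have h1 := nrm_coord v i; have h2 := nrm_coord v j.
rewrite ler_wpM2l //.
have : `|v i 0| * `|v j 0| <= (v i 0 ^+ 2 + v j 0 ^+ 2) / 2.
  rewrite -[v i 0 ^+ 2]real_normK ?num_real // -[v j 0 ^+ 2]real_normK ?num_real //.
  set a := `|v i 0|; set b := `|v j 0|.
  have : 0 <= (a - b) ^+ 2 by apply: sqr_ge0.
  lra.
lra.
Qed.

Lemma strict_uniform (R : realFieldType) q (P : 'M[R]_q) :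
  (forall v : 'cV[R]_q, v != 0 -> nrm (P *m v) < nrm v) ->
  exists2 e, 0 < e & forall v, nrm (P *m v) <= (1 - e) * nrm v.
Proof.
move=> Hs.
set A := 1%:M - P^T *m P.
have quadA v : ip v (A *m v) = nrm v - nrm (P *m v).
  by rewrite /A mulmxBl mul1mx -mulmxA ipDr ipNr ipMr trmxK.
have Apos v : 0 <= ip v (A *m v).
  rewrite quadA subr_ge0; have [->|nz] := eqVneq v 0.
    by rewrite mulmx0.
  exact/ltW/Hs.
have Asym : A^T = A by rewrite /A linearB /= trmx1 trmx_mul trmxK.
have Aunit : A \in unitmx.
  rewrite unitmxE unitfE; apply/negP => /det0P [w wnz wA].
  have Av : A *m w^T = 0 by rewrite -[A]Asym -trmx_mul wA trmx0.
  have wT : (w^T != 0) by apply: contra wnz => /eqP h; rewrite -[w]trmxK h trmx0.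
  have := Hs w^T wT; rewrite -subr_gt0 -quadA Av ip0r ltxx //.
set B := invmx A.
have [K [K0 HK]] := quad_bound B.
exists (K + 1)^-1; first by rewrite invr_gt0; lra.
move=> v.
set lam := K + 1.
set y := B *m v.
have Ay : A *m y = v by rewrite /y mulmxA mulmxV // mul1mx.
have h := Apos (lam *: v - y).
have e1 : ip (lam *: v - y) (A *m (lam *: v - y)) =
  lam ^+ 2 * ip v (A *m v) - lam * ip v (A *m y) - lam * ip y (A *m v)
  + ip y (A *m y).
  rewrite mulmxBr -!scalemxAr !ipDl !ipDr !ipNl !ipNr !ipZl !ipZr.
  ring.
have e2 : ip y (A *m v) = nrm v by rewrite ipMr Asym Ay.
have e3 : ip y (A *m y) = ip v (B *m v) by rewrite Ay ipC.
rewrite e1 e2 e3 Ay -/(nrm v) in h.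
have := HK v; have := quadA v; have := nrm_ge0 v.
set a := ip v (A *m v); set n := nrm v; set b := ip v (B *m v).
move: h; rewrite -/a.
have lam1 : 1 <= lam by rewrite /lam; lra.
move=> h nn qa hb.
have Kn : K * n = lam * n - n by rewrite /lam; ring.
have : lam * n <= lam ^+ 2 * a.
  have h' : 0 <= lam ^+ 2 * a - lam * n - lam * n + b by exact: h.
  lra.
move=> h2.
have lpos : 0 < lam by lra.
have h4 : n <= lam * a by rewrite -(ler_pM2l lpos) mulrA -expr2.
have h5 : lam^-1 * n <= a.
  rewrite -[a](mulKf (lt0r_neq0 lpos)); apply: ler_wpM2l => //.
  by rewrite invr_ge0 ltW.
rewrite mulrBl mul1r; change (nrm (P *m v) <= n - lam^-1 * n); lra.
Qed.

Lemma det_bound (R : realFieldType) q (M : 'M[R]_q) Bd :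
  (forall i j, `|M i j| <= Bd) ->
  `|\det M| <= (#|{perm 'I_q}|)%:R * Bd ^+ q.
Proof.
move=> hB; rewrite /determinant (le_trans (ler_norm_sum _ _ _)) //.
rewrite -mulr_natl -sumr_const mulr1 mulr_suml; apply: ler_sum => s _; rewrite mul1r.
rewrite normrM normr_sign mul1r normr_prod.
rewrite -[q in Bd ^+ q]card_ord -prodr_const; apply: ler_prod => i _.
by rewrite normr_ge0 hB.
Qed.

Lemma sep_lower (R : realFieldType) (e n d m : R) :
  0 < e -> e <= 1 -> 0 <= n -> m <= (1 - e) * n ->
  0 <= n - 2 * (1 + e / 2) * d + (1 + e / 2) ^+ 2 * m ->
  e ^+ 2 / 8 * n <= n - 2 * d + m.
Proof.
move=> e0 e1 n0 hm h.
set mu := e / 2 in h.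
have mu0 : 0 < mu by rewrite /mu; lra.
have emu : e = 2 * mu by rewrite /mu; field.
rewrite emu in hm *.
have h1 : 0 <= (1 + mu) * (n - 2 * d + m) - mu ^+ 2 * n.
  have : (1 + mu) * (n - 2 * d + m) - mu ^+ 2 * n =
    (n - 2 * (1 + mu) * d + (1 + mu) ^+ 2 * m) + mu * n - mu * (1 + mu) * m
    - mu ^+ 2 * n by ring.
  move=> ->.
  have : mu * (1 + mu) * m <= mu * (1 + mu) * ((1 - 2 * mu) * n).
    by rewrite ler_wpM2l // mulr_ge0 //; lra.
  have : mu * (1 + mu) * ((1 - 2 * mu) * n) = mu * n - mu^+2 * n - 2 * mu ^+ 3 * n by ring.
  have : 0 <= mu ^+ 3 * n by rewrite mulr_ge0 // exprn_ge0 // ltW.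
  lra.
have hmu : mu <= 1/2 by lra.
have : (2 * mu) ^+ 2 / 8 * n = mu ^+ 2 * n / 2 by field.
move=> ->.
have h2 : 0 <= mu ^+ 2 * n by rewrite mulr_ge0 // sqr_ge0.
move: h1; set Y := n - 2 * d + m => h1.
have Y0 : 0 <= Y.
  have : 0 <= (1 + mu) * Y by lra.
  by rewrite pmulr_rge0 //; lra.
have : 0 <= (1/2 - mu) * Y by rewrite mulr_ge0 //; lra.
have : (1 + mu) * Y = Y + mu * Y by ring.
have : (1/2 - mu) * Y = Y / 2 - mu * Y by ring.
lra.
Qed.

Lemma det_lower (R : realFieldType) q (e : R) : 0 < e ->
  exists2 d, 0 < d & forall Q : 'M[R]_q,
    (forall v, nrm (Q *m v) <= (1 - e) * nrm v) -> d <= (\det (1%:M - Q)) ^+ 2.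
Proof.
move=> e0.
set e1 := Num.min e 1.
have e10 : 0 < e1 by rewrite lt_min e0 ltr01.
have e11 : e1 <= 1 by rewrite ge_min lexx orbT.
have e1e : e1 <= e by rewrite ge_min lexx.
set c := e1 ^+ 2 / 8.
have c0 : 0 < c by rewrite /c divr_gt0 // exprn_gt0.
set Bd := 1 + c^-1.
set N := (#|{perm 'I_q}|)%:R * Bd ^+ q : R.
have N0 : 0 < N.
  have ci : 0 < c^-1 by rewrite invr_gt0.
  have Bd0 : 0 < Bd by rewrite /Bd; lra.
  rewrite mulr_gt0 ?exprn_gt0 // ltr0n.
  by apply/card_gt0P; exists 1%g.
exists (N ^+ 2)^-1; first by rewrite invr_gt0 exprn_gt0.
move=> Q HQ.
have HQ1 v : nrm (Q *m v) <= (1 - e1) * nrm v.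
  apply: (le_trans (HQ v)); rewrite ler_wpM2r ?nrm_ge0 //; lra.
set D := 1%:M - Q.
have Dlow v : c * nrm v <= nrm (D *m v).
  have Dv : D *m v = v - Q *m v by rewrite /D mulmxBl mul1mx.
  set w := Q *m v.
  have h0 := nrm_ge0 (v - (1 + e1 / 2) *: w).
  have E : forall a : R, nrm (v - a *: w) = nrm v - 2 * a * ip v w + a ^+ 2 * nrm w.
    move=> a; rewrite /nrm !ipDl !ipDr !ipNl !ipNr !ipZl !ipZr (ipC w v); ring.
  rewrite E in h0.
  have E1 : nrm (v - w) = nrm v - 2 * ip v w + nrm w.
    by have := E 1; rewrite scale1r => ->; ring.
  rewrite Dv E1.
  apply: sep_lower => //; first exact: nrm_ge0.
  exact: HQ1.
have Dunit : D \in unitmx.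
  rewrite unitmxE unitfE -det_tr; apply/negP => /det0P [w wnz wA].
  have Dv : D *m w^T = 0 by rewrite -[D]trmxK -trmx_mul wA trmx0.
  have := Dlow w^T; rewrite Dv /nrm ip0r => h.
  have wT : (w^T != 0) by apply: contra wnz => /eqP h'; rewrite -[w]trmxK h' trmx0.
  have := nrm_lt wT; rewrite /nrm => h2.
  have : c * ip w^T w^T > 0 by rewrite mulr_gt0.
  by rewrite ltNge h.
set Di := invmx D.
have Dib i j : `|Di i j| <= Bd.
  set u := col j Di.
  have Du : D *m u = delta_mx j 0 by rewrite /u colE mulmxA mulmxV // mul1mx.
  have nd : nrm (delta_mx j 0 : 'cV[R]_q) = 1.
    rewrite /nrm ipE (bigD1 j) //= big1 ?addr0; first by rewrite mxE !eqxx mulr1.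
    by move=> k /negbTE kj; rewrite mxE kj mul0r.
  have := Dlow u; rewrite Du nd => hu.
  have hc := nrm_coord u i.
  have : u i 0 = Di i j by rewrite /u mxE.
  move=> <-.
  have hu2 : u i 0 ^+ 2 <= c^-1.
    apply: (le_trans hc); rewrite -(ler_pM2l c0) mulrV ?unitfE ?lt0r_neq0 //.
  rewrite /Bd.
  have : `|u i 0| <= 1 + `|u i 0| ^+ 2.
    have : 0 <= (`|u i 0| - 1/2) ^+ 2 by apply: sqr_ge0.
    nra.
  rewrite real_normK ?num_real //; lra.
have hdi := det_bound Dib.
have prod1 : \det D * \det Di = 1 by rewrite -det_mulmx mulmxV // det1.
have : 1 <= `|\det D| * N.
  have : `|\det D| * `|\det Di| = 1 by rewrite -normrM prod1 normr1.
  move=> <-; rewrite ler_wpM2l //.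
move=> h1.
rewrite -(real_normK (num_real (\det D))).
have N2 : 0 < N ^+ 2 by rewrite exprn_gt0.
rewrite -(ler_pM2r N2) mulVf ?lt0r_neq0 //.
rewrite -exprMn.
have x0 : 0 <= `|\det D| * N by rewrite mulr_ge0 // ltW.
move: h1 x0; set x := `|\det D| * N => h1 x0.
nra.
Qed.

Lemma rk1 (R : realFieldType) q (phi w : 'cV[R]_q) :
  phi *m phi^T *m w = ip phi w *: phi.
Proof. by rewrite -mulmxA [phi^T *m w]mx11_scalar mul_mx_scalar. Qed.

Lemma ip_rk1 (R : realFieldType) q (phi w : 'cV[R]_q) :
  ip w (phi *m phi^T *m w) = ip phi w ^+ 2.
Proof. by rewrite rk1 ipZr ipC expr2. Qed.

Lemma rank_kill (R : realFieldType) q (u : 'I_q -> 'cV[R]_q) (v : 'cV[R]_q) :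
  \rank (\matrix_(i < q, j < q) u j i 0) = q ->
  (forall j, ip (u j) v = 0) -> v = 0.
Proof.
set M := \matrix_(i < q, j < q) u j i 0 => rk hv.
have Mu : M^T \in unitmx by rewrite -row_free_unit /row_free mxrank_tr rk.
have Mv : M^T *m v = 0.
  apply/matrixP => j k; rewrite (ord1 k) [RHS]mxE -(hv j) ipE mxE.
  by apply: eq_bigr => i _; rewrite !mxE.
by rewrite -[v]mul1mx -(mulVmx Mu) -mulmxA Mv mulmx0.
Qed.

Lemma delta_low (R : realFieldType) q (P : 'M[R]_q) :
  (forall v : 'cV[R]_q, v != 0 -> nrm (P *m v) < nrm v) ->
  exists2 d, 0 < d & forall Q : 'M[R]_q,
    (forall v, nrm (Q *m v) <= nrm (P *m v)) -> d <= Delta Q ^+ 2.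
Proof.
move=> /strict_uniform [e e0 He].
have [d d0 Hd] := det_lower q e0.
exists d => // Q HQ; apply: Hd => v; exact: le_trans (HQ v) (He v).
Qed.

Lemma Yreg_eq (R : realFieldType) q (Phi : 'M[R]_q) (theta thg thg0 : 'cV[R]_q) :
  thg = theta + Phi *m (thg0 - theta) ->
  Yreg Phi thg thg0 = Delta Phi *: theta.
Proof.
move=> ->; rewrite /Yreg /Delta.
have -> : theta + Phi *m (thg0 - theta) - Phi *m thg0 = DDmx Phi *m theta.
  by rewrite /DDmx mulmxBl mul1mx mulmxBr [Phi *m thg0 - _]addrC addrA addrK.
by rewrite mulmxA mul_adj_mx mul_scalar_mx.
Qed.

Lemma nrm_sub_scale (R : realFieldType) q (w phi : 'cV[R]_q) (a : R) :
  nrm (w - a *: phi) = nrm w - 2 * a * ip phi w + a ^+ 2 * nrm phi.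
Proof. rewrite /nrm !ipDl !ipDr !ipNl !ipNr !ipZl !ipZr (ipC w phi); ring. Qed.

Lemma gain_nrm (R : realFieldType) q (gg : nat -> R) (phi : nat -> 'cV[R]_q) k :
  dt_gain gg phi k = (gg k + nrm (phi k))^-1.
Proof.
by rewrite /dt_gain /nrm ipE; congr (_ + _)^-1; apply: eq_bigr => i _; rewrite expr2.
Qed.

Lemma step_apply (R : realFieldType) q (gg : nat -> R) (phi : nat -> 'cV[R]_q) k w :
  dt_step gg phi k *m w = w - (dt_gain gg phi k * ip (phi k) w) *: phi k.
Proof.
by rewrite /dt_step mulmxBl mul1mx -scalemxAl rk1 scalerA.
Qed.

Lemma step_nrm (R : realFieldType) q (gg : nat -> R) (phi : nat -> 'cV[R]_q) k w :
  0 < gg k ->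
  nrm (dt_step gg phi k *m w) <= nrm w - dt_gain gg phi k * ip (phi k) w ^+ 2.
Proof.
move=> g0; rewrite step_apply nrm_sub_scale.
have n0 : 0 <= nrm (phi k) := nrm_ge0 _.
have gp : 0 < dt_gain gg phi k by rewrite gain_nrm invr_gt0; lra.
have gn : dt_gain gg phi k * nrm (phi k) <= 1.
  rewrite gain_nrm mulrC ler_pdivrMr; last by lra.
  by rewrite mul1r; lra.
set g := dt_gain gg phi k; set s := ip (phi k) w; set n := nrm (phi k).
have : (g * s) ^+ 2 * n = g * s ^+ 2 * (g * n) by ring.
move=> ->.
have : g * s ^+ 2 * (g * n) <= g * s ^+ 2.
  by rewrite -[X in _ <= X]mulr1 ler_wpM2l // mulr_ge0 // ?sqr_ge0 // ltW.
lra.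
Qed.

Lemma dt_part (R : realFieldType) (q : nat) (theta : 'cV[R]_q) (gamma : R)
  (thg0 th0 : 'cV[R]_q) : 0 < gamma ->
  (forall (phi : nat -> 'cV[R]_q) (gg : nat -> R),
     (exists M : R, forall k i, `|phi k i ord0| <= M) ->
     (forall k, 0 < gg k) ->
     identifiable (fun _ : nat => True) phi ->
     exists C rho : R, 0 <= rho < 1 /\
       forall k i, `|dt_th gamma gg phi theta thg0 th0 k i ord0 - theta i ord0|
                     <= C * rho ^+ k).
Proof.
move=> gam0 phi gg _ gg0 [tau [_ rk]].
set Ph := dt_Phi gg phi.
have thg_eq k : dt_thg gg phi theta thg0 k = theta + Ph k *m (thg0 - theta).
  elim: k => [|k IH] /=; first by rewrite /Ph /= mul1mx addrC subrK.
  rewrite IH /Ph /= -mulmxA.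
  set w := dt_Phi gg phi k *m (thg0 - theta).
  rewrite mulmxDr !step_apply.
  have -> : yout phi theta k = ip (phi k) theta by [].
  by rewrite addrAC subrK.
have Y_eq k : Yreg (Ph k) (dt_thg gg phi theta thg0 k) thg0 = Delta (Ph k) *: theta.
  exact: Yreg_eq (thg_eq k).
set z := fun k => dt_th gamma gg phi theta thg0 th0 k - theta.
set f := fun k => gamma / (gamma + Delta (Ph k) ^+ 2).
have z_eq k : z k.+1 = f k *: z k.
  rewrite /z /f /= -/(Ph k) Y_eq.
  set th := dt_th gamma gg phi theta thg0 th0 k.
  set De := Delta (Ph k).
  have hpos : 0 < gamma + De ^+ 2 by have := sqr_ge0 De; lra.
  rewrite -scalerBr scalerA -[theta - th]opprB scalerN.
  have -> : gamma / (gamma + De ^+ 2) = 1 - De / (gamma + De ^+ 2) * De.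
    by field; rewrite lt0r_neq0.
  by rewrite scalerBl scale1r addrAC.
have f0 k : 0 < f k by rewrite /f divr_gt0 //; have := sqr_ge0 (Delta (Ph k)); lra.
have f1 k : f k <= 1.
  rewrite /f ler_pdivrMr ?mul1r; have := sqr_ge0 (Delta (Ph k)); lra.
have zc k i : `|z k.+1 i 0| = f k * `|z k i 0|.
  by rewrite z_eq mxE normrM gtr0_norm.
have znincr i k m : (k <= m)%N -> `|z m i 0| <= `|z k i 0|.
  elim: m => [|m IH]; first by rewrite leqn0 => /eqP ->.
  rewrite leq_eqVlt => /orP [/eqP -> //|]; rewrite ltnS => /IH h.
  by rewrite zc (le_trans _ h) // ler_piMl.
have PhS k v : Ph k.+1 *m v = dt_step gg phi k *m (Ph k *m v) by rewrite mulmxA.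
have Phdec k v : nrm (Ph k.+1 *m v) <= nrm (Ph k *m v).
  rewrite PhS (le_trans (step_nrm phi (Ph k *m v) (gg0 k))) // lerBlDr lerDl.
  rewrite mulr_ge0 // ?sqr_ge0 // gain_nrm invr_ge0.
  by have := gg0 k; have := nrm_ge0 (phi k); lra.
have mono v k m : (k <= m)%N -> nrm (Ph m *m v) <= nrm (Ph k *m v).
  elim: m => [|m IH]; first by rewrite leqn0 => /eqP ->.
  rewrite leq_eqVlt => /orP [/eqP -> //|]; rewrite ltnS => /IH h.
  exact: le_trans (Phdec m v) h.
have kill k v : nrm v <= nrm (dt_step gg phi k *m v) -> ip (phi k) v = 0.
  move=> h; have h2 := step_nrm phi v (gg0 k).
  have gp : 0 < dt_gain gg phi k.
    by rewrite gain_nrm invr_gt0; have := gg0 k; have := nrm_ge0 (phi k); lra.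
  have : dt_gain gg phi k * ip (phi k) v ^+ 2 <= 0 by lra.
  rewrite pmulr_rle0 // => hs.
  by apply/eqP; rewrite -sqrf_eq0 eq_le hs sqr_ge0.
set K := (\sum_j (tau j : nat)).+1.
have tauK j : (tau j < K)%N.
  by rewrite /K ltnS (bigD1 j) //= leq_addr.
have strict v : v != 0 -> nrm (Ph K *m v) < nrm v.
  move=> vnz; rewrite ltNge; apply/negP => hle; move/negP: vnz; apply.
  have fix1 k : (k <= K)%N -> Ph k *m v = v.
    elim: k => [|k IH]; first by rewrite /Ph /= mul1mx.
    move=> kK; have IH' := IH (ltnW kK).
    have hk : nrm v <= nrm (dt_step gg phi k *m v).
      by rewrite -{2}IH' -PhS; apply: (le_trans hle); apply: mono.
    by rewrite PhS IH' step_apply (kill k v hk) mulr0 scale0r subr0.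
  have kz k : (k < K)%N -> ip (phi k) v = 0.
    move=> kK; apply: kill; rewrite -{2}(fix1 k (ltnW kK)) -PhS fix1 //.
  apply/eqP; apply: (rank_kill rk) => j; exact: kz.
have [d d0 Hd] := delta_low strict.
set rho := gamma / (gamma + d).
have rho0 : 0 < rho by rewrite divr_gt0 //; lra.
have rho1 : rho < 1 by rewrite /rho ltr_pdivrMr ?mul1r; lra.
have frho k : (K <= k)%N -> f k <= rho.
  move=> Kk; have := Hd (Ph k) (fun v => mono v K k Kk) => hd.
  rewrite /f /rho ler_pdivrMr; last by have := sqr_ge0 (Delta (Ph k)); lra.
  rewrite mulrAC ler_pdivlMr; last by lra.
  by rewrite ler_wpM2l ?lerD2l // ltW.
have decay i m : `|z (K + m)%N i 0| <= rho ^+ m * `|z K i 0|.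
  elim: m => [|m IH]; first by rewrite addn0 expr0 mul1r.
  rewrite addnS zc exprS -mulrA; apply: ler_pM => //.
  - exact: ltW.
  - by rewrite frho // leq_addr.
exists ((\sum_i `|z 0%N i 0|) / rho ^+ K), rho; split; first by rewrite ltW.
move=> k i.
have zi : `|z 0%N i 0| <= \sum_i `|z 0%N i 0|.
  by rewrite (bigD1 i) //= lerDl sumr_ge0.
have S0 : 0 <= \sum_i `|z 0%N i 0| by rewrite sumr_ge0.
have rK : 0 < rho ^+ K by rewrite exprn_gt0.
have -> : dt_th gamma gg phi theta thg0 th0 k i ord0 - theta i ord0 = z k i 0.
  by rewrite /z !mxE.
rewrite mulrAC -mulrA.
case: (leqP K k) => Kk.
- rewrite -(subnKC Kk) exprD mulrAC mulfV ?lt0r_neq0 // mul1r.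
  apply: le_trans (decay i (k - K)%N) _; rewrite mulrC ler_wpM2r //.
    by rewrite exprn_ge0 // ltW.
  exact: le_trans (znincr i 0%N K isT) zi.
- apply: le_trans (znincr i 0%N k isT) _.
  apply: le_trans zi _; rewrite -[X in X <= _]mulr1 ler_wpM2l //.
  rewrite ler_pdivlMr // mul1r.
  by apply: ler_wiXn2l; [exact: ltW | exact: ltW | exact: ltnW].
Qed.

Lemma cw_cst (R : realType) (A : set R) (c : R) : {within A, continuous (fun _ : R => c)}.
Proof. by apply: continuous_subspaceT => x; apply: cst_continuous. Qed.

Lemma cw_add (R : realType) (A : set R) (f g : R -> R) :
  {within A, continuous f} -> {within A, continuous g} ->
  {within A, continuous (fun s => f s + g s)}.
Proof. move=> hf hg x; exact: (continuousD (hf x) (hg x)). Qed.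

Lemma cw_mul (R : realType) (A : set R) (f g : R -> R) :
  {within A, continuous f} -> {within A, continuous g} ->
  {within A, continuous (fun s => f s * g s)}.
Proof. move=> hf hg x; exact: (continuousM (hf x) (hg x)). Qed.

Lemma cw_sum (R : realType) (A : set R) n (F : 'I_n -> R -> R) :
  (forall i, {within A, continuous (F i)}) ->
  {within A, continuous (fun s => \sum_i F i s)}.
Proof.
move=> hF; elim: n F hF => [|n IH] F hF.
  have -> : (fun s => \sum_(i < 0) F i s) = (fun _ => 0).
    by apply: funext => s; rewrite big_ord0.
  exact: cw_cst.
have -> : (fun s => \sum_(i < n.+1) F i s) =
   (fun s => \sum_(i < n) F (widen_ord (leqnSn n) i) s + F ord_max s).
  by apply: funext => s; rewrite big_ord_recr.
apply: cw_add; last exact: hF.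
by apply: IH => i; exact: hF.
Qed.

Lemma is_derive_sumf (R : realType) n (h : 'I_n -> R -> R) (x : R) (dh : 'I_n -> R) :
  (forall i, is_derive x 1 (h i) (dh i)) ->
  is_derive x 1 (fun s => \sum_i h i s) (\sum_i dh i).
Proof.
move=> hd; have -> : (fun s => \sum_i h i s) = \sum_i h i by rewrite fct_sumE.
exact: is_derive_sum.
Qed.

Lemma is_deriveMf (R : realType) (f g : R -> R) (x df dg : R) :
  is_derive x 1 f df -> is_derive x 1 g dg ->
  is_derive x 1 (fun s => f s * g s) (f x * dg + g x * df).
Proof.
move=> hf hg; have := is_deriveM hf hg.
by [].
Qed.

Lemma cw_of_derive (R : realType) (a b : R) (f df : R -> R) : a < b ->
  (forall t, a < t -> is_derive t 1 f (df t)) ->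
  {within [set t | b <= t], continuous f}.
Proof.
move=> ab hd; apply: continuous_in_subspaceT => x; rewrite inE /= => bx.
have : derivable f x 1 by have := hd x (lt_le_trans ab bx); case.
by move/derivable1_diffP/differentiable_continuous.
Qed.

Lemma nincr (R : realType) (a : R) (f df : R -> R) :
  {within [set t | a <= t], continuous f} ->
  (forall t, a < t -> is_derive t 1 f (df t)) ->
  (forall t, a < t -> df t <= 0) ->
  forall x y, a <= x -> x <= y -> f y <= f x.
Proof.
move=> hc hd hn x y ax xy.
apply: (@ler0_derive1_nincry R f a) => //.
- by move=> t; rewrite in_itv /= andbT => at0; have := hd t at0; case.
- move=> t; rewrite in_itv /= andbT => at0.
  by have := hd t at0 => hdt; rewrite derive1E derive_val; exact: hn.
- have -> : [set` `[a, +oo[%R] = [set t | a <= t].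
    by apply/seteqP; split => t /=; rewrite in_itv /= andbT.
  exact: hc.
Qed.

Lemma cw_opp (R : realType) (A : set R) (f : R -> R) :
  {within A, continuous f} -> {within A, continuous (fun s => - f s)}.
Proof. move=> hf x; exact: (continuousN (hf x)). Qed.

Lemma is_deriveDf (R : realType) (f g : R -> R) (x df dg : R) :
  is_derive x 1 f df -> is_derive x 1 g dg ->
  is_derive x 1 (fun s => f s + g s) (df + dg).
Proof. by move=> hf hg; have := is_deriveD hf hg. Qed.

Lemma is_deriveNf (R : realType) (f : R -> R) (x df : R) :
  is_derive x 1 f df -> is_derive x 1 (fun s => - f s) (- df).
Proof. by move=> hf; have := is_deriveN hf. Qed.

Lemma mv_cont (R : realType) q (A : set R) (Mf : R -> 'M[R]_q) (v : 'cV[R]_q) :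
  (forall i j, {within A, continuous (fun s => Mf s i j)}) ->
  forall i, {within A, continuous (fun s => (Mf s *m v) i 0)}.
Proof.
move=> hc i.
have -> : (fun s => (Mf s *m v) i 0) = (fun s => \sum_j Mf s i j * v j 0).
  by apply: funext => s; rewrite mxE.
apply: cw_sum => j; apply: cw_mul => //; exact: cw_cst.
Qed.

Lemma mv_der (R : realType) q (Mf : R -> 'M[R]_q) (M' : 'M[R]_q) (t : R) (v : 'cV[R]_q) :
  (forall i j, is_derive t 1 (fun s => Mf s i j) (M' i j)) ->
  forall i, is_derive t 1 (fun s => (Mf s *m v) i 0) ((M' *m v) i 0).
Proof.
move=> hd i.
have -> : (fun s => (Mf s *m v) i 0) = (fun s => \sum_j Mf s i j * v j 0).
  by apply: funext => s; rewrite mxE.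
rewrite mxE; apply: is_derive_sumf => j.
have h := @is_deriveMf R (fun s => Mf s i j) (fun _ => v j 0) t _ _ (hd i j)
  (is_derive_cst (v j 0) t 1).
by apply: is_derive_eq h _; rewrite mulr0 add0r mulrC.
Qed.

Lemma nrm_cont (R : realType) q (A : set R) (w : R -> 'cV[R]_q) :
  (forall i, {within A, continuous (fun s => w s i 0)}) ->
  {within A, continuous (fun s => nrm (w s))}.
Proof.
move=> hc.
have -> : (fun s => nrm (w s)) = (fun s => \sum_i w s i 0 * w s i 0).
  by apply: funext => s; rewrite /nrm ipE.
by apply: cw_sum => i; apply: cw_mul.
Qed.

Lemma nrm_der (R : realType) q (w : R -> 'cV[R]_q) (w' : 'cV[R]_q) (t : R) :
  (forall i, is_derive t 1 (fun s => w s i 0) (w' i 0)) ->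
  is_derive t 1 (fun s => nrm (w s)) (2 * ip (w t) w').
Proof.
move=> hd.
have -> : (fun s => nrm (w s)) = (fun s => \sum_i w s i 0 * w s i 0).
  by apply: funext => s; rewrite /nrm ipE.
have h : forall i, is_derive t 1 (fun s => w s i 0 * w s i 0)
    (w t i 0 * w' i 0 + w t i 0 * w' i 0).
  by move=> i; exact: is_deriveMf (hd i) (hd i).
apply: is_derive_eq (is_derive_sumf h) _.
rewrite ipE mulr_sumr; apply: eq_bigr => i _; ring.
Qed.

Lemma nrm_nincr (R : realType) q (a : R) (w w' : R -> 'cV[R]_q) :
  (forall i, {within [set t | a <= t], continuous (fun s => w s i 0)}) ->
  (forall t i, a < t -> is_derive t 1 (fun s => w s i 0) (w' t i 0)) ->
  (forall t, a < t -> ip (w t) (w' t) <= 0) ->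
  forall x y, a <= x -> x <= y -> nrm (w y) <= nrm (w x).
Proof.
move=> hc hd hn.
apply: (nincr (df := fun t => 2 * ip (w t) (w' t))).
- exact: nrm_cont.
- by move=> t at0; apply: nrm_der => i; exact: hd.
- by move=> t at0; rewrite pmulr_rle0 //; exact: hn.
Qed.

Lemma flow_nincr (R : realType) q (a : R) (w : R -> 'cV[R]_q) (gg : R -> R)
    (phi : R -> 'cV[R]_q) :
  (forall i, {within [set t | a <= t], continuous (fun s => w s i 0)}) ->
  (forall t i, a < t -> is_derive t 1 (fun s => w s i 0)
     ((- (gg t *: (phi t *m (phi t)^T *m w t))) i 0)) ->
  (forall t, a < t -> 0 < gg t) ->
  forall x y, a <= x -> x <= y -> nrm (w y) <= nrm (w x).
Proof.
move=> hc hd hg.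
apply: (nrm_nincr (w' := fun t => - (gg t *: (phi t *m (phi t)^T *m w t)))) => //.
move=> t at0; rewrite ipNr ipZr ip_rk1 oppr_le0 mulr_ge0 // ?sqr_ge0 //.
exact/ltW/hg.
Qed.

Lemma const_on (R : realType) (a b : R) (f : R -> R) :
  {within [set t | a <= t], continuous f} ->
  (forall t, a < t < b -> is_derive t 1 f 0) ->
  forall x, a <= x <= b -> f x = f a.
Proof.
move=> hc hd x /andP [ax xb].
have ab : a <= b by apply: le_trans xb.
have hc' : {within `[a, b], continuous f}.
  by apply: continuous_subspaceW hc => t /=; rewrite in_itv /= => /andP [].
have dv t : t \in `]a, b[%R -> derivable f t 1.
  by rewrite in_itv /= => /hd; case.
have d0 t : t \in `]a, b[%R -> f^`() t = 0.
  by rewrite in_itv /= => /hd h; rewrite derive1E derive_val.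
have ia : a \in `[a, b]%R by rewrite in_itv /= lexx ab.
have ix : x \in `[a, b]%R by rewrite in_itv /= ax xb.
apply/eqP; rewrite eq_le; apply/andP; split.
- apply: (ler0_derive1_le_cc dv) => //.
  by move=> t /d0 ->.
- apply: (ger0_derive1_le_cc dv) => //.
  by move=> t /d0 ->.
Qed.

Lemma is_derive_expl (R : realType) (k t : R) :
  is_derive t 1 (fun s => expR (k * s)) (expR (k * t) * k).
Proof.
have hg : is_derive t 1 (fun s : R => k * s) k.
  have := @is_deriveMf R (fun _ => k) id t 0 1 (is_derive_cst k t 1) (is_derive_id t 1).
  by rewrite mulr1 mulr0 addr0.
exact: (@is_derive1_comp R expR (fun s => k * s) t (expR (k * t)) k (is_derive_expR _) hg).
Qed.

Lemma exp_decay (R : realType) q (T c : R) (z z' : R -> 'cV[R]_q) :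
  0 < T -> 0 <= c ->
  (forall i, {within [set t | 0 <= t], continuous (fun s => z s i 0)}) ->
  (forall (t : R) i, 0 < t -> is_derive t 1 (fun s => z s i 0) (z' t i 0)) ->
  (forall t : R, 0 < t -> ip (z t) (z' t) <= 0) ->
  (forall t, T < t -> ip (z t) (z' t) <= - c * nrm (z t)) ->
  forall t : R, 0 <= t -> nrm (z t) <= nrm (z 0) * expR (2 * c * T) * expR (- (2 * c * t)).
Proof.
move=> T0 c0 hc hd hn hT t t0.
have mono := nrm_nincr hc hd hn.
have N0 := mono 0 t (lexx 0) t0.
have Nz0 : 0 <= nrm (z 0) := nrm_ge0 _.
case: (leP t T) => tT.
- rewrite -mulrA -expRD; apply: (le_trans N0); rewrite ler_peMr //.
  apply: le_trans (expR_ge1Dx _).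
  have : 2 * c * t <= 2 * c * T by rewrite ler_wpM2l // mulr_ge0.
  lra.
set h := fun s => expR (2 * c * s) * nrm (z s).
have hder (s : R) : 0 < s -> is_derive s 1 h
    (expR (2 * c * s) * (2 * ip (z s) (z' s)) + nrm (z s) * (expR (2 * c * s) * (2 * c))).
  move=> s0; apply: is_deriveMf; first exact: is_derive_expl.
  by apply: nrm_der => i; exact: hd.
have hcont := cw_of_derive T0 hder.
have hmono := nincr hcont (fun s sT => hder s (lt_trans T0 sT)).
have hTt : h t <= h T.
  apply: hmono => //; last exact: ltW.
  move=> s sT; have := hT s sT; have E0 := expR_gt0 (2 * c * s).
  move=> hs.
  have : expR (2 * c * s) * (2 * ip (z s) (z' s)) <=
         expR (2 * c * s) * (2 * (- c * nrm (z s))).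
    apply: ler_wpM2l; [exact: ltW E0 | lra].
  have : nrm (z s) * (expR (2 * c * s) * (2 * c)) =
         - (expR (2 * c * s) * (2 * (- c * nrm (z s)))) by ring.
  lra.
have NT := mono 0 T (lexx 0) (ltW T0).
have ET := expR_gt0 (2 * c * T).
have Et := expR_gt0 (2 * c * t).
have e : expR (- (2 * c * t)) * expR (2 * c * t) = 1.
  by rewrite expRN mulVf // lt0r_neq0.
have key : expR (2 * c * t) * nrm (z t) <= expR (2 * c * T) * nrm (z 0).
  apply: (le_trans hTt); rewrite /h ler_wpM2l //; exact: ltW.
have -> : nrm (z t) = expR (- (2 * c * t)) * (expR (2 * c * t) * nrm (z t)).
  by rewrite mulrA e mul1r.
rewrite [X in _ <= X]mulrC [nrm (z 0) * _]mulrC.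
apply: ler_wpM2l; first exact/ltW/expR_gt0.
exact: key.
Qed.

Lemma coord_bound (R : realFieldType) (x K e : R) :
  0 <= K -> 0 < e -> x ^+ 2 <= K * e ^+ 2 -> `|x| <= (1 + K) * e.
Proof.
move=> K0 e0 h.
rewrite -(real_normK (num_real x)) in h.
set y := `|x| in h *.
have y0 : 0 <= y by rewrite normr_ge0.
case: (leP y e) => ye.
- have : e <= (1 + K) * e by rewrite ler_peMl //; lra.
  lra.
- have : y * e <= K * e * e.
    have : y * e <= y * y by rewrite ler_wpM2l // ltW.
    have : K * e ^+ 2 = K * e * e by rewrite expr2 mulrA.
    lra.
  rewrite ler_pM2r // => h2; nra.
Qed.

Lemma mxsubE (R : realType) m n (A B : 'M[R]_(m, n)) i j : (A - B) i j = A i j - B i j.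
Proof. by rewrite !mxE. Qed.

Lemma zmod_id (V : zmodType) (a b c : V) : -a + b - -c = -((a - b) - c).
Proof. by rewrite opprK opprB opprB addrC [b - a]addrC. Qed.

Lemma ct_part (R : realType) (q : nat) (theta : 'cV[R]_q) (gamma : R)
  (thg0 th0 : 'cV[R]_q) :
  0 < gamma ->
  (forall (phi : R -> 'cV[R]_q) (gg : R -> R)
          (thg : R -> 'cV[R]_q) (Phi : R -> 'M[R]_q) (th : R -> 'cV[R]_q),
     (exists M : R, forall t i, 0 <= t -> `|phi t i ord0| <= M) ->
     (forall i, {within [set t : R | 0 <= t], continuous (fun t => phi t i ord0)}) ->
     (forall t, 0 <= t -> 0 < gg t) ->
     {within [set t : R | 0 <= t], continuous gg} ->
     thg 0 = thg0 ->
     (forall i, {within [set t : R | 0 <= t], continuous (fun t => thg t i ord0)}) ->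
     (forall (t : R) i, 0 < t -> is_derive t (1 : R) (fun s => thg s i ord0)
        ((- (gg t *: (phi t *m (phi t)^T *m thg t))
          + (gg t * yout phi theta t) *: phi t) i ord0)) ->
     Phi 0 = 1%:M ->
     (forall i j, {within [set t : R | 0 <= t], continuous (fun t => Phi t i j)}) ->
     (forall (t : R) i j, 0 < t -> is_derive t (1 : R) (fun s => Phi s i j)
        ((- (gg t *: (phi t *m (phi t)^T *m Phi t))) i j)) ->
     th 0 = th0 ->
     (forall i, {within [set t : R | 0 <= t], continuous (fun t => th t i ord0)}) ->
     (forall (t : R) i, 0 < t -> is_derive t (1 : R) (fun s => th s i ord0)
        (((gamma * Delta (Phi t)) *:
           (Yreg (Phi t) (thg t) thg0 - Delta (Phi t) *: th t)) i ord0)) ->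
     identifiable (fun t : R => 0 < t) phi ->
     exists C a : R, 0 < a /\
       forall t i, 0 <= t -> `|th t i ord0 - theta i ord0| <= C * expR (- (a * t))).
Proof.
move=> gam0 phi gg thg Phi th _ _ Hgg _ Hthg0 Hthgc Hthgd HPhi0 HPhic HPhid
  Hth0 Hthc Hthd [tau [taupos rk]].
have ggpos (t : R) : 0 < t -> 0 < gg t by move=> h; apply: Hgg; exact: ltW.
set Phi' := fun t => - (gg t *: (phi t *m (phi t)^T *m Phi t)).
have Pv_cont (v : 'cV[R]_q) i :
    {within [set t : R | 0 <= t], continuous (fun s => (Phi s *m v) i 0)}.
  exact: (@mv_cont R q _ Phi v HPhic i).
have Pv_der (v : 'cV[R]_q) (t : R) i : 0 < t -> is_derive t 1 (fun s => (Phi s *m v) i 0)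
    ((- (gg t *: (phi t *m (phi t)^T *m (Phi t *m v)))) i 0).
  move=> t0; have := @mv_der R q Phi (Phi' t) t v (fun i j => HPhid t i j t0) i.
  suff -> : Phi' t *m v = - (gg t *: (phi t *m (phi t)^T *m (Phi t *m v))) by [].
  by rewrite /Phi' mulNmx -scalemxAl mulmxA.
have Pv_mono (v : 'cV[R]_q) (x y : R) : 0 <= x -> x <= y ->
    nrm (Phi y *m v) <= nrm (Phi x *m v).
  exact: (@flow_nincr R q 0 (fun s => Phi s *m v) gg phi (Pv_cont v)
    (fun t i h => Pv_der v t i h) ggpos).
set c := thg0 - theta.
set f := fun s => thg s - theta - Phi s *m c.
have f_cont i : {within [set t : R | 0 <= t], continuous (fun s => f s i 0)}.
  have -> : (fun s => f s i 0) =
      (fun s => thg s i 0 + (- theta i 0) + - (Phi s *m c) i 0).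
    by apply: funext => s; rewrite /f !mxE.
  apply: cw_add; last by apply: cw_opp; exact: Pv_cont.
  by apply: cw_add; [exact: Hthgc | exact: cw_cst].
have f_der (t : R) i : 0 < t -> is_derive t 1 (fun s => f s i 0)
    ((- (gg t *: (phi t *m (phi t)^T *m f t))) i 0).
  move=> t0.
  have -> : (fun s => f s i 0) =
      (fun s => thg s i 0 + (- theta i 0) + - (Phi s *m c) i 0).
    by apply: funext => s; rewrite /f !mxE.
  have h := is_deriveDf (is_deriveDf (Hthgd t i t0) (is_derive_cst (- theta i 0) t 1))
    (is_deriveNf (Pv_der c t i t0)).
  apply: is_derive_eq h _; rewrite addr0 -mxsubE.
  apply: (congr1 (fun M : 'cV[R]_q => M i 0)).
  have -> : (gg t * yout phi theta t) *: phi t = gg t *: (phi t *m (phi t)^T *m theta).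
    by rewrite rk1 scalerA.
  rewrite /f (mulmxBr _ (thg t - theta)) mulmxBr !scalerBr.
  rewrite (mulmxBr _ (thg t)) scalerBr opprK opprB opprB addrC; by rewrite [X in _ = _ + X]addrC.
have f0 : f 0 = 0 by rewrite /f Hthg0 HPhi0 mul1mx subrr.
have f_zero (t : R) : 0 <= t -> f t = 0.
  move=> t0; apply: nrm_eq0; apply/eqP; rewrite eq_le nrm_ge0 andbT.
  have := @flow_nincr R q 0 f gg phi f_cont f_der ggpos 0 t (lexx 0) t0.
  by rewrite f0 /nrm ip0r.
have thg_eq (t : R) : 0 <= t -> thg t = theta + Phi t *m c.
  move=> t0; have := f_zero t t0; rewrite /f => /eqP.
  by rewrite subr_eq0 subr_eq => /eqP ->; rewrite addrC.
set z := fun s => th s - theta.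
have z_cont i : {within [set t : R | 0 <= t], continuous (fun s => z s i 0)}.
  have -> : (fun s => z s i 0) = (fun s => th s i 0 + - theta i 0).
    by apply: funext => s; rewrite /z !mxE.
  by apply: cw_add; [exact: Hthc | exact: cw_cst].
set z' := fun t => - (gamma * Delta (Phi t) ^+ 2) *: z t.
have z_der (t : R) i : 0 < t -> is_derive t 1 (fun s => z s i 0) (z' t i 0).
  move=> t0.
  have -> : (fun s => z s i 0) = (fun s => th s i 0 + - theta i 0).
    by apply: funext => s; rewrite /z !mxE.
  have h := is_deriveDf (Hthd t i t0) (is_derive_cst (- theta i 0) t 1).
  apply: is_derive_eq h _; rewrite addr0.
  apply: (congr1 (fun M : 'cV[R]_q => M i 0)).
  rewrite (Yreg_eq (thg_eq t (ltW t0))) /z' /z -scalerBr scalerA.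
  by rewrite -[theta - th t]opprB scalerN -scaleNr expr2 mulrA.
have ip_z (t : R) : ip (z t) (z' t) = - (gamma * Delta (Phi t) ^+ 2) * nrm (z t).
  by rewrite /z' ipZr.
have hn (t : R) : 0 < t -> ip (z t) (z' t) <= 0.
  move=> _; rewrite ip_z mulNr oppr_le0 mulr_ge0 ?nrm_ge0 // mulr_ge0 ?sqr_ge0 //.
  exact: ltW.
set T := 1 + \sum_j tau j.
have sum0 : 0 <= \sum_j tau j by rewrite sumr_ge0 // => j _; exact/ltW/taupos.
have T0 : 0 < T by rewrite /T; lra.
have tauT j : 0 < tau j < T.
  rewrite taupos /= /T (bigD1 j) //=.
  have : 0 <= \sum_(i | i != j) tau i by rewrite sumr_ge0 // => i _; exact/ltW/taupos.
  lra.
have strict (v : 'cV[R]_q) : v != 0 -> nrm (Phi T *m v) < nrm v.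
  move=> vnz; rewrite ltNge; apply/negP => hle; move/negP: vnz; apply.
  set w := fun s => Phi s *m v.
  have w0 : w 0 = v by rewrite /w HPhi0 mul1mx.
  have Nc (s : R) : 0 <= s <= T -> nrm (w s) = nrm v.
    move=> /andP [s0 sT]; apply/eqP; rewrite eq_le; apply/andP; split.
      by rewrite -{1}w0; apply: Pv_mono.
    by apply: (le_trans hle); apply: Pv_mono.
  have sz (s : R) : 0 < s < T -> ip (phi s) (w s) = 0.
    move=> /andP [s0 sT].
    have d1 := @nrm_der R q w _ s (fun i => Pv_der v s i s0).
    have d2 : is_derive s 1 (fun x => nrm (w x)) 0.
      apply: (near_eq_is_derive (f := fun _ : R => nrm v)); rewrite -/(nrm (w _)).
      have hsin : s \in `]0, T[%R by rewrite in_itv /= s0 sT.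
      apply: filterS (near_in_itvoo hsin) => x; rewrite in_itv /= => /andP [x0 xT].
      by rewrite Nc // ltW // ltW.
    have := @derive_val _ _ _ _ _ _ _ d1; rewrite (@derive_val _ _ _ _ _ _ _ d2).
    rewrite ipNr ipZr ip_rk1 => /esym/eqP.
    move/eqP => h.
    have h2 : gg s * ip (phi s) (w s) ^+ 2 = 0 by lra.
    move/eqP: h2; rewrite mulf_eq0 (negbTE (lt0r_neq0 (ggpos s s0))) /= sqrf_eq0.
    by move/eqP.
  have wconst (s : R) : 0 <= s <= T -> w s = v.
    move=> hs; apply/matrixP => i j; rewrite (ord1 j).
    have hder : forall t : R, 0 < t < T -> is_derive t 1 (fun x => w x i 0) 0.
      move=> t /andP [t0 tT]; apply: is_derive_eq (Pv_der v t i t0) _.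
      by rewrite rk1 (sz t) ?t0 ?tT // scale0r scaler0 oppr0 mxE.
    have := @const_on R 0 T (fun x => w x i 0) (Pv_cont v i) hder s hs => /= ->.
    by rewrite w0.
  apply/eqP; apply: (rank_kill rk) => j.
  have /andP [tj0 tjT] := tauT j.
  by rewrite -(wconst (tau j)) ?ltW ?tj0 // sz // tj0.
have [d d0 Hd] := delta_low strict.
have dlow (t : R) : T <= t -> d <= Delta (Phi t) ^+ 2.
  move=> Tt; apply: Hd => v; apply: Pv_mono => //; exact: ltW.
set cc := gamma * d.
have cc0 : 0 < cc by rewrite mulr_gt0.
have hT (t : R) : T < t -> ip (z t) (z' t) <= - cc * nrm (z t).
  move=> Tt; rewrite ip_z !mulNr lerN2 ler_wpM2r ?nrm_ge0 //.
  apply: ler_wpM2l; [exact: ltW gam0 | apply: dlow; exact: ltW Tt].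
have Hdec := @exp_decay R q T cc z z' T0 (ltW cc0) z_cont z_der hn hT.
set K := nrm (z 0) * expR (2 * cc * T).
have K0 : 0 <= K by rewrite mulr_ge0 ?nrm_ge0 // ltW // expR_gt0.
exists (1 + K), cc; split => // t i t0.
have -> : th t i ord0 - theta i ord0 = z t i 0 by rewrite /z !mxE.
apply: coord_bound => //; first exact: expR_gt0.
apply: (le_trans (nrm_coord (z t) i)); apply: (le_trans (Hdec t t0)).
rewrite -/K ler_wpM2l //.
rewrite -expRM_natl le_eqVlt; apply/orP; left; apply/eqP; congr expR.
by rewrite mulrN (mulrA 2 cc t).
Qed.

Theorem proposition2 (R : realType) (q : nat) (theta : 'cV[R]_q) (gamma : R)
  (thg0 th0 : 'cV[R]_q) :
  0 < gamma ->
  (* continuous time *)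
  (forall (phi : R -> 'cV[R]_q) (gg : R -> R)
          (thg : R -> 'cV[R]_q) (Phi : R -> 'M[R]_q) (th : R -> 'cV[R]_q),
     (exists M : R, forall t i, 0 <= t -> `|phi t i ord0| <= M) ->
     (forall i, {within [set t : R | 0 <= t], continuous (fun t => phi t i ord0)}) ->
     (forall t, 0 <= t -> 0 < gg t) ->
     {within [set t : R | 0 <= t], continuous gg} ->
     (* thg' = -gg phi phi^T thg + gg phi y, thg(0) = thg0 *)
     thg 0 = thg0 ->
     (forall i, {within [set t : R | 0 <= t], continuous (fun t => thg t i ord0)}) ->
     (forall (t : R) i, 0 < t -> is_derive t (1 : R) (fun s => thg s i ord0)
        ((- (gg t *: (phi t *m (phi t)^T *m thg t))
          + (gg t * yout phi theta t) *: phi t) i ord0)) ->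
     (* Phi' = -gg phi phi^T Phi, Phi(0) = I *)
     Phi 0 = 1%:M ->
     (forall i j, {within [set t : R | 0 <= t], continuous (fun t => Phi t i j)}) ->
     (forall (t : R) i j, 0 < t -> is_derive t (1 : R) (fun s => Phi s i j)
        ((- (gg t *: (phi t *m (phi t)^T *m Phi t))) i j)) ->
     (* th' = gamma Delta (Y - Delta th), th(0) = th0 *)
     th 0 = th0 ->
     (forall i, {within [set t : R | 0 <= t], continuous (fun t => th t i ord0)}) ->
     (forall (t : R) i, 0 < t -> is_derive t (1 : R) (fun s => th s i ord0)
        (((gamma * Delta (Phi t)) *:
           (Yreg (Phi t) (thg t) thg0 - Delta (Phi t) *: th t)) i ord0)) ->
     identifiable (fun t : R => 0 < t) phi ->
     exists C a : R, 0 < a /\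
       forall t i, 0 <= t -> `|th t i ord0 - theta i ord0| <= C * expR (- (a * t)))
  /\
  (* discrete time *)
  (forall (phi : nat -> 'cV[R]_q) (gg : nat -> R),
     (exists M : R, forall k i, `|phi k i ord0| <= M) ->
     (forall k, 0 < gg k) ->
     identifiable (fun _ : nat => True) phi ->
     exists C rho : R, 0 <= rho < 1 /\
       forall k i, `|dt_th gamma gg phi theta thg0 th0 k i ord0 - theta i ord0|
                     <= C * rho ^+ k).
Proof.
move=> gam0; split; first exact: ct_part.
exact: dt_part.
Qed.
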